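(* Let $\Gamma$ be a temporal language preserved by $\mathrm{peak}$. If $\Gamma$ pp-defines neither $\mathrm{EqXor}=\{(x,y,z)\in\mathbb{Q}^3\mid x=y\vee x=z\}$ nor $\mathrm{EqOr}_n=\{(x_1,\dots,x_n)\in\mathbb{Q}^n\mid\bigvee_{i\neq j}x_i=x_j\}$ for any $n\ge3$, then $\Gamma$ is preserved by all permutations of $\mathbb{Q}$.
   Context: A temporal language is a relational structure with domain $\mathbb{Q}$ and finite signature whose relations are first-order definable in $(\mathbb{Q};<)$. $\Gamma$ pp-defines $R$ if $R$ is definable by a primitive positive formula (existentially quantified conjunction of atomic formulas) over the signature of $\Gamma$. A unary operation $f$ preserves $\Gamma$ if applying $f$ componentwise maps each relation of $\Gamma$ into itself. $\mathrm{peak}(x)=-1$ for $x\neq0$ and $1$ for $x=0$. *)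

(* Defs.v *)
From mathcomp Require Import all_boot all_order all_algebra.
From Stdlib Require List.
Set Implicit Arguments. Unset Strict Implicit. Unset Printing Implicit Defensive.
Import Order.TTheory GRing.Theory Num.Theory.
Local Open Scope ring_scope.

Record qrel := QRel { ar : nat; rl : ('I_ar -> rat) -> Prop }.

Definition empty_qrel : qrel := @QRel 0 (fun _ => False).

Definition structure := seq qrel.

Definition update (v : nat -> rat) (x : nat) (q : rat) : nat -> rat :=
  fun y => if y == x then q else v y.

Inductive fo :=
| FLt : nat -> nat -> fo
| FEq : nat -> nat -> fo
| FFalse : fo
| FNot : fo -> fo
| FAnd : fo -> fo -> fo
| FOr : fo -> fo -> fo
| FEx : nat -> fo -> fo.

Fixpoint fo_sat (v : nat -> rat) (phi : fo) : Prop :=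
  match phi with
  | FLt i j => v i < v j
  | FEq i j => v i = v j
  | FFalse => False
  | FNot p => ~ fo_sat v p
  | FAnd p q => fo_sat v p /\ fo_sat v q
  | FOr p q => fo_sat v p \/ fo_sat v q
  | FEx x p => exists r : rat, fo_sat (update v x r) p
  end.

(* R of arity n is defined by phi with free variables among x_0..x_{n-1}
   (the truth value must not depend on the other variables). *)
Definition fo_defines n (R : ('I_n -> rat) -> Prop) (phi : fo) : Prop :=
  forall (t : 'I_n -> rat) (v : nat -> rat),
    (forall i : 'I_n, v i = t i) -> (R t <-> fo_sat v phi).

Definition fo_definable_lt (R : qrel) : Prop :=
  exists phi, fo_defines (@rl R) phi.

Definition temporal (G : structure) : Prop :=
  forall R, List.In R G -> fo_definable_lt R.

Inductive ppf :=
| PTrue : ppf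
| PEq : nat -> nat -> ppf
| PRel : nat -> seq nat -> ppf          (* R_k(x_{a_0},...,x_{a_{m-1}}) *)
| PAnd : ppf -> ppf -> ppf
| PEx : nat -> ppf -> ppf.

Fixpoint pp_sat (G : structure) (v : nat -> rat) (phi : ppf) : Prop :=
  match phi with
  | PTrue => True
  | PEq i j => v i = v j
  | PRel k args =>
      let R := nth empty_qrel G k in
      (k < size G)%N /\ size args = ar R /\
      @rl R (fun i : 'I_(ar R) => v (nth 0%N args i))
  | PAnd p q => pp_sat G v p /\ pp_sat G v q
  | PEx x p => exists r : rat, pp_sat G (update v x r) p
  end.

Definition pp_defines (G : structure) n (R : ('I_n -> rat) -> Prop) : Prop :=
  exists phi : ppf, forall (t : 'I_n -> rat) (v : nat -> rat),
    (forall i : 'I_n, v i = t i) -> (R t <-> pp_sat G v phi).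

Definition preserves (G : structure) (f : rat -> rat) : Prop :=
  forall R, List.In R G -> forall t : 'I_(ar R) -> rat, @rl R t -> @rl R (fun i => f (t i)).

Definition peak (x : rat) : rat := if x == 0 then 1 else -1.

Definition EqXor (t : 'I_3 -> rat) : Prop :=
  t (@Ordinal 3 0 isT) = t (@Ordinal 3 1 isT) \/
  t (@Ordinal 3 0 isT) = t (@Ordinal 3 2 isT).

Definition EqOr n (t : 'I_n -> rat) : Prop :=
  exists i j : 'I_n, i != j /\ t i = t j.

(* Main.v *)
Require Import Defs.
From mathcomp Require Import all_boot all_order all_algebra.
From mathcomp Require Import lra zify ring.
From Stdlib Require Import Classical FunctionalExtensionality.
Set Implicit Arguments. Unset Strict Implicit. Unset Printing Implicit Defensive.
Import Order.TTheory GRing.Theory Num.Theory.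
Local Open Scope ring_scope.

Fixpoint rename (r : nat -> nat) (p : ppf) : ppf :=
  match p with
  | PTrue => PTrue
  | PEq i j => PEq (r i) (r j)
  | PRel k args => PRel k (map r args)
  | PAnd p q => PAnd (rename r p) (rename r q)
  | PEx x p => PEx (r x) (rename r p)
  end.

Lemma rename_sat G r p : injective r -> forall v w, (forall y, w (r y) = v y) ->
  (pp_sat G w (rename r p) <-> pp_sat G v p).
Proof.
move=> ri; elim: p => [|i j|k args|p IHp q IHq|x p IHp] v w Hw /=.
- by [].
- by rewrite !Hw.
- rewrite size_map; split=> -[Hk [Hs HR]]; (split; first by []); (split; first by []).
  + have -> : (fun i : 'I_(ar (nth empty_qrel G k)) => v (nth 0%N args i)) =
              (fun i => w (nth 0%N (map r args) i)); last by [].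
    apply: functional_extensionality => i.
    by rewrite (nth_map 0%N) ?Hw // Hs.
  + have <- : (fun i : 'I_(ar (nth empty_qrel G k)) => v (nth 0%N args i)) =
              (fun i => w (nth 0%N (map r args) i)); last by [].
    apply: functional_extensionality => i.
    by rewrite (nth_map 0%N) ?Hw // Hs.
- by rewrite (IHp v w) // (IHq v w).
- split=> -[q Hq]; exists q.
  + apply/(IHp (update v x q) (update w (r x) q)) => // y.
    by rewrite /update (inj_eq ri) Hw.
  + apply/(IHp (update v x q) (update w (r x) q)) => // y.
    by rewrite /update (inj_eq ri) Hw.
Qed.

Lemma exs_sat G (l : seq nat) p v :
  pp_sat G v (foldr PEx p l) <->
  exists w, (forall y, y \notin l -> w y = v y) /\ pp_sat G w p.
Proof.
elim: l v => [|x l IH] v /=.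
- split; first by move=> H; exists v.
  by move=> [w [Hw Hp]]; have -> : v = w by apply: functional_extensionality => y; rewrite Hw.
- split.
  + move=> [r /IH [w [Hw Hp]]]; exists w; split=> // y.
    rewrite inE negb_or => /andP [Hyx Hyl]; rewrite Hw // /update (negbTE Hyx) //.
  + move=> [w [Hw Hp]]; exists (w x); apply/IH; exists w; split=> // y Hy.
    rewrite /update; case: eqP => [->//|/eqP Hyx]; apply: Hw.
    by rewrite inE negb_or Hyx.
Qed.

Lemma ands_sat G (T : Type) (F : T -> ppf) (l : seq T) v :
  pp_sat G v (foldr PAnd PTrue (map F l)) <-> List.Forall (fun x => pp_sat G v (F x)) l.
Proof.
elim: l => [|x l IH] /=; first by split=> // _; constructor.
split; first by move=> [H1 /IH H2]; constructor.
by move=> H; inversion H; split => //; apply/IH.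
Qed.

Lemma mem_In (T : eqType) (x : T) l : x \in l -> List.In x l.
Proof. elim: l => [|y l IH] //=; rewrite inE => /orP [/eqP ->|/IH]; [left|right]; done. Qed.

Definition ppd G m (R : ('I_m -> rat) -> Prop) := pp_defines G R.

Lemma ppd_ext G m (R S : ('I_m -> rat) -> Prop) : ppd G R -> (forall y, R y <-> S y) -> ppd G S.
Proof. move=> [phi H] E; exists phi => t v Hv; rewrite -E; exact: H. Qed.

Lemma ppd_and G m (R S : ('I_m -> rat) -> Prop) : ppd G R -> ppd G S -> ppd G (fun y => R y /\ S y).
Proof.
move=> [p Hp] [q Hq]; exists (PAnd p q) => t v Hv /=.
by rewrite (Hp t v Hv) (Hq t v Hv).
Qed.

Lemma ppd_big G m (I : eqType) (l : seq I) (R : I -> ('I_m -> rat) -> Prop) :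
  (forall x, ppd G (R x)) -> ppd G (fun y => forall x, x \in l -> R x y).
Proof.
move=> H; elim: l => [|x l IH].
- by exists PTrue => t v Hv /=; split.
- apply: ppd_ext (ppd_and (H x) IH) _ => y; split.
  + by move=> [H1 H2] z; rewrite inE => /orP [/eqP ->|]; [| apply: H2].
  + by move=> H1; split; [apply: H1; rewrite inE eqxx | move=> z Hz; apply: H1; rewrite inE Hz orbT].
Qed.

Definition extv n (t : 'I_n -> rat) (y : nat) : rat :=
  if insub y is Some i then t i else 0.

Lemma extvE n (t : 'I_n -> rat) (i : 'I_n) : extv t i = t i.
Proof. by rewrite /extv valK. Qed.

Lemma ppd_sub G n m (R : ('I_n -> rat) -> Prop) (h : 'I_n -> 'I_m) :
  ppd G R -> ppd G (fun y => R (fun i => y (h i))).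
Proof.
move=> [phi Hphi].
pose eqs := foldr PAnd PTrue (map (fun i : 'I_n => PEq (m + i)%N (h i)) (enum 'I_n)).
exists (foldr PEx (PAnd eqs (rename (addn m) phi)) (map (addn m) (iota 0 n))) => y v Hv.
rewrite exs_sat.
have Hren : forall w, pp_sat G w (rename (addn m) phi) <-> pp_sat G (fun z => w (m + z)%N) phi.
  by move=> w; apply: rename_sat => //; apply: addnI.
have notin : forall z : nat, (z < m)%N -> z \notin map (addn m) (iota 0 n).
  move=> z Hz; apply/mapP => -[x _ Ex]; move: Hz; rewrite Ex; lia.
split.
- move=> HR.
  pose w := fun z : nat => if (m <= z)%N then
              (if insub (z - m)%N is Some i then v (h i) else v z) else v z.
  have Hwm : forall i : 'I_n, w (m + i)%N = v (h i).
    by move=> i; rewrite /w leq_addr addKn valK.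
  exists w; split.
  + move=> z Hz; rewrite /w; case: leqP => // Hmz.
    case: insubP => // i Hi Ei; exfalso; move/negP: Hz; apply.
    apply/mapP; exists (z - m)%N; first by rewrite mem_iota /=.
    lia.
  + split.
    * apply/ands_sat; apply/List.Forall_forall => i _ /=.
      rewrite Hwm /w; have := ltn_ord (h i); case: leqP => // Hh _; lia.
    * apply/Hren; have [i|H1 _] := Hphi (fun i => y (h i)) (fun z => w (m + z)%N).
        by rewrite Hwm Hv.
      exact: H1.
- move=> [w [Hw [Heq Hp]]].
  move/Hren: Hp; have [i|_ H2] := Hphi (fun i => y (h i)) (fun z => w (m + z)%N); last exact: H2.
  move/ands_sat/List.Forall_forall: Heq => /(_ i (mem_In (mem_enum _ _))) /= ->.
  by rewrite Hw ?Hv // notin.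
Qed.

Lemma in_nth (G : structure) R : List.In R G -> exists k, (k < size G)%N /\ nth empty_qrel G k = R.
Proof.
elim: G => [|R' G IH] //= [->|/IH [k [Hk Ek]]]; first by exists 0%N.
by exists k.+1.
Qed.

Lemma ppd_base G R : List.In R G -> ppd G (@rl R).
Proof.
move=> /in_nth [k [Hk Ek]].
exists (PRel k (iota 0 (ar R))) => t v Hv /=.
rewrite Ek size_iota.
have -> : (fun i : 'I_(ar R) => v (nth 0%N (iota 0 (ar R)) i)) = t.
  by apply: functional_extensionality => i; rewrite nth_iota // add0n Hv.
by split => [H|[_ [_ H]]].
Qed.
Definition incbij (F : rat -> rat) := (forall x y, x < y -> F x < F y) /\ (forall z, exists x, F x = z).

Lemma incbij_lt F : incbij F -> forall x y, (F x < F y) = (x < y).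
Proof.
move=> [HF _] x y; case: (ltgtP x y) => [H|H|->]; first by rewrite HF.
- by apply/negbTE; rewrite -leNgt ltW // HF.
- by rewrite ltxx.
Qed.

Lemma incbij_inj F : incbij F -> injective F.
Proof.
move=> HF x y E; case: (ltgtP x y) => // H; move: (incbij_lt HF x y) (incbij_lt HF y x);
  rewrite E ltxx H => //.
Qed.

Lemma fo_inv F : incbij F -> forall phi v w, (forall y, w y = F (v y)) -> (fo_sat v phi <-> fo_sat w phi).
Proof.
move=> HF; elim => [i j|i j||p IH|p IHp q IHq|p IHp q IHq|x p IH] v w Hw /=.
- by rewrite !Hw incbij_lt.
- rewrite !Hw; split => [->//|]; exact: incbij_inj.
- by [].
- by rewrite (IH v w).
- by rewrite (IHp v w) // (IHq v w).
- by rewrite (IHp v w) // (IHq v w).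
- split.
  + move=> [r Hr]; exists (F r); apply/(IH (update v x r)) => // y.
    by rewrite /update; case: eqP.
  + move=> [r Hr]; have [r' Er] := HF.2 r; exists r'; apply/(IH _ (update w x r)) => // y.
    by rewrite /update; case: eqP.
Qed.

Lemma incbij_comp F G : incbij F -> incbij G -> incbij (fun x => G (F x)).
Proof.
move=> [F1 F2] [G1 G2]; split; first by move=> x y H; apply: G1; apply: F1.
move=> z; have [y Ey] := G2 z; have [x Ex] := F2 y; exists x; by rewrite Ex.
Qed.

Lemma incbij_id : incbij id.
Proof. by split => // z; exists z. Qed.

Lemma incbij_aff (p q : rat) : 0 < p -> incbij (fun x => p * x + q).
Proof.
move=> Hp; split; first by move=> x y H; rewrite ltrD2r ltr_pM2l.
move=> z; exists ((z - q) / p); rewrite mulrC -mulrA mulVf ?lt0r_neq0 //; lra.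
Qed.

Lemma incbij_kink (p l : rat) : 0 < l -> incbij (fun x => if x < p then p + l * (x - p) else x).
Proof.
move=> Hl; split.
- move=> x y H; case: ifP => Hx; case: ifP => Hy.
  + by rewrite ltrD2l ltr_pM2l // ltrD2r.
  + have : l * (x - p) < 0 by rewrite pmulr_rlt0 // subr_lt0.
    move: Hy => /negbT; rewrite -leNgt; lra.
  + move: Hx Hy => /negbT; rewrite -leNgt => Hx Hy; exfalso; move: (lt_le_trans Hy Hx).
    by rewrite ltNge ltW.
  + by [].
- move=> z; case: (ltP z p) => Hz.
  + exists (p + (z - p) / l).
    have Hlt : (z - p) / l < 0 by rewrite pmulr_llt0 ?invr_gt0 // subr_lt0.
    have -> : p + (z - p) / l < p by lra.
    rewrite addrAC subrr add0r mulrC -mulrA mulVf ?lt0r_neq0 //; lra.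
  + by exists z; rewrite ltNge Hz.
Qed.

Lemma interp (a b : seq rat) : sorted <%R a -> sorted <%R b -> size a = size b ->
  exists F, incbij F /\ forall k, (k < size a)%N -> F (nth 0 a k) = nth 0 b k.
Proof.
elim: a b => [|a0 a IH] [|b0 b] //=.
- by move=> _ _ _; exists id; split => //; exact: incbij_id.
move=> Ha Hb [Hs].
have [F [HF HFk]] := IH b (path_sorted Ha) (path_sorted Hb) Hs.
case: a Ha Hs HFk IH => [|a1 a] Ha Hs HFk _.
- case: b Hb Hs {HFk} => // _ _.
  exists (fun x => 1 * F x + (b0 - F a0)); split.
  + by apply: incbij_comp HF (incbij_aff _ _).
  + by case=> // _ /=; rewrite mul1r; lra.
case: b Hb Hs HFk => // b1 b Hb Hs HFk.
have Fa1 := HFk 0%N isT; rewrite /= in Fa1.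
have Hx : F a0 < b1 by rewrite -Fa1 incbij_lt //; move: Ha => /= /andP [].
have Hb01 : b0 < b1 by move: Hb => /= /andP [].
pose l := (b1 - b0) / (b1 - F a0).
have Hl : 0 < l by rewrite /l divr_gt0 // subr_gt0.
have El : l * (F a0 - b1) = b0 - b1.
  rewrite /l; field; rewrite subr_eq0 gt_eqF //.
exists (fun x => (fun z => if z < b1 then b1 + l * (z - b1) else z) (F x)); split.
- exact: incbij_comp HF (incbij_kink _ Hl).
- case=> [_|k Hk] /=.
  + rewrite Hx El; lra.
  + rewrite HFk //.
    have : nth 0 (b1 :: b) k \in b1 :: b by rewrite mem_nth // -Hs.
    rewrite inE => /orP [/eqP ->|]; first by rewrite ltxx.
    move: Hb => /= /andP [_ Hb] Hin.
    have := order_path_min (@lt_trans _ rat) Hb => /allP /(_ _ Hin) H.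
    by rewrite ltNge ltW.
Qed.
Lemma min_ex (Q : nat -> Prop) m : Q m -> exists j, Q j /\ forall j', (j' < j)%N -> ~ Q j'.
Proof.
elim/ltn_ind: m => m IH Qm.
case: (classic (exists j', (j' < m)%N /\ Q j')) => [[j' [Hj' Qj']]|N].
- exact: IH Hj' Qj'.
- by exists m; split => // j' Hj' Qj'; apply: N; exists j'.
Qed.

Lemma exists_above (s : seq rat) : exists a, forall x, x \in s -> x < a.
Proof.
exists (1 + \sum_(x <- s) `|x|); elim: s => [|y s IH] x //.
rewrite big_cons inE => /orP [/eqP ->|Hx].
- have := @sumr_ge0 _ _ s xpredT (fun x => `|x|) (fun x _ => normr_ge0 x) ; have := ler_norm y.
  move=> H1 H2; lra.
- have := IH x Hx; have := normr_ge0 y; move=> *; lra.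
Qed.

Section Main.
Variables (G : structure) (n : nat) (P : ('I_n -> rat) -> Prop).
Hypothesis Hinv : forall F, incbij F -> forall u, P u -> P (fun i => F (u i)).
Hypothesis Hpeak : forall u, P u -> P (fun i => peak (u i)).
Hypothesis Hsub : forall m (h : 'I_n -> 'I_m), ppd G (fun y => P (fun i => y (h i))).
Hypothesis HnoX : ~ ppd G EqXor.
Hypothesis HnoOr : forall j, (3 <= j)%N -> ~ ppd G (@EqOr j).

Lemma Pext u u' : P u -> (forall i, u i = u' i) -> P u'.
Proof. move=> H E; suff -> : u' = u by []. by apply: functional_extensionality => i; rewrite E. Qed.

Lemma Paff u p q : 0 < p -> P u -> P (fun i => p * u i + q).
Proof. by move=> Hp; exact: (Hinv (incbij_aff q Hp)). Qed.

Lemma Pind u a c d : c != d -> P u -> P (fun i => if u i == a then c else d).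
Proof.
move=> Hcd Pu.
have P1 : P (fun i => peak (1 * u i + - a)) by apply: Hpeak; apply: Paff.
case: (ltgtP c d) Hcd => // Hlt _.
- have P2 : P (fun i => peak (1 * peak (1 * u i + - a) + 1)) by apply: Hpeak; apply: Paff.
  have P3 := @Paff _ ((d - c) / 2) ((c + d) / 2) _ P2.
  have H3 := P3 (_ : 0 < (d - c) / 2).
  apply: (Pext (H3 _)); first lra.
  move=> i; rewrite /peak !mul1r; case: (eqVneq (u i) a) => [->|Hne].
  + rewrite subrr eqxx /=.
    lra.
  + have -> : (u i + - a == 0) = false by apply/negbTE; rewrite subr_eq0.
    rewrite addNr eqxx; lra.
- have P3 := @Paff _ ((c - d) / 2) ((c + d) / 2) _ P1.
  have H3 := P3 (_ : 0 < (c - d) / 2).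
  apply: (Pext (H3 _)); first lra.
  move=> i; rewrite /peak !mul1r; case: (eqVneq (u i) a) => [->|Hne].
  + rewrite subrr eqxx /=; lra.
  + have -> : (u i + - a == 0) = false by apply/negbTE; rewrite subr_eq0.
    lra.
Qed.

Variable t : 'I_n -> rat.
Hypothesis Pt : P t.

Lemma Pconst c : P (fun _ => c).
Proof.
have [a Ha] := exists_above (map t (enum 'I_n)).
apply: Pext (Pind a (_ : c + 1 != c) Pt) _; first by rewrite -subr_eq0 addrAC subrr add0r.
move=> i; have := Ha (t i) (map_f _ (mem_enum _ _)).
by case: eqP => // ->; rewrite ltxx.
Qed.

Lemma Ptwo i0 c d : c != d -> P (fun i => if t i == t i0 then c else d).
Proof. by move=> Hcd; apply: Pind. Qed.

Definition D (u : 'I_n -> rat) := forall i i', t i = t i' -> u i = u i'.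
Definition TV (u : 'I_n -> rat) := exists c d, forall i, u i = c \/ u i = d.
Definition nv (u : 'I_n -> rat) := size (undup (map u (enum 'I_n))).

Definition o0 := @Ordinal 3 0 isT.
Definition o1 := @Ordinal 3 1 isT.
Definition o2 := @Ordinal 3 2 isT.

Lemma exists_idx u : ~ P u -> exists i0 : 'I_n, True.
Proof.
move=> NP; apply: NNPP => N; apply: NP; apply: (Pext Pt) => i; exfalso; apply: N; by exists i.
Qed.

Lemma step1 : ~ exists u, D u /\ TV u /\ ~ P u.
Proof.
move=> [u0 [Du0 [TVu0 NPu0]]].
have [j0 _] := exists_idx NPu0.
pose Q m := exists u i0, D u /\ TV u /\ ~ P u /\ #|[pred i | u i == u i0]| = m.
have [|m [[u [i0 [Du [[c0 [d0 Hcd0]] [NPu Hm]]]]] Hmin]] :=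
  min_ex (Q := Q) (m := #|[pred i | u0 i == u0 j0]|).
  by exists u0, j0.
pose c := u i0; pose d := if c == c0 then d0 else c0.
have Hcd : forall i, u i = c \/ u i = d.
  move=> i; rewrite /d; case: (eqVneq c c0) => [Ec|Hc].
  - by rewrite Ec; apply: Hcd0.
  - have Ec : c = d0 by case: (Hcd0 i0) => // E; move: Hc; rewrite /c E eqxx.
    by case: (Hcd0 i) => ->; [right|left].
have Hdc : c != d.
  apply/negP => /eqP Ecd; apply: NPu; apply: (Pext (Pconst c)) => i.
  by case: (Hcd i) => ->.
have Hdc' : (d == c) = false by apply/negbTE; rewrite eq_sym.
have HcA : forall i, t i = t i0 -> u i = c by move=> i E; apply: Du.
case: (classic (exists i1, u i1 = c /\ t i1 <> t i0)) => [[i1 [Hi1c Hi1t]]|NA]; last first.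
  apply: NPu; apply: (Pext (Ptwo i0 Hdc)) => i.
  case: eqP => [/HcA //|Hne]; case: (Hcd i) => // Ec; exfalso; apply: NA; by exists i.
pose u' := fun i => if (u i == c) && (t i != t i0) then c else d.
have Pu' : P u'.
  apply: NNPP => NPu'; apply: (Hmin #|[pred i | u' i == u' i1]|); last first.
    exists u', i1; split; last split; last split => //.
    + move=> i i' E; rewrite /u' E (Du i i' E) //.
    + by exists c, d => i; rewrite /u'; case: ifP; [left|right].
  rewrite -Hm; apply: proper_card; apply/properP; split.
    apply/subsetP => i; rewrite !inE /u' /=; have -> : u i1 == c by apply/eqP.
    have -> : t i1 != t i0 by apply/eqP.
    by case: ifP => [/andP [/eqP -> _]|_]; rewrite ?eqxx // eq_sym (negbTE Hdc).
  exists i0; first by rewrite !inE.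
    rewrite inE /u' /= eqxx andbF.
    have -> : u i1 == c by apply/eqP.
    have -> : t i1 != t i0 by apply/eqP.
    by rewrite /= Hdc'.
pose h := fun i => if t i == t i0 then o1 else if u i == c then o2 else o0.
apply: HnoX; apply: ppd_ext (Hsub h) _ => y; rewrite /EqXor -/o0 -/o1 -/o2; split.
- move=> Py; apply: NNPP => /not_or_and [N1 N2]; apply: NPu.
  apply: (Pext (Pind (y o0) (_ : d != c) Py)); first by rewrite eq_sym.
  move=> i; rewrite /h; case: (eqVneq (t i) (t i0)) => [E|Hne].
    by rewrite (HcA _ E); case: eqP => // E'; exfalso; apply: N1.
  case: (eqVneq (u i) c) => [->|Hu].
    by case: eqP => // E; exfalso; apply: N2.
  by rewrite eqxx; case: (Hcd i) => // E; rewrite E eqxx in Hu.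
- move=> Hy.
  case: (classic (y o1 = y o0 /\ y o2 = y o0)) => [[E1 E2]|Hne].
    apply: (Pext (Pconst (y o0))) => i; rewrite /h.
    by case: ifP => _; [|case: ifP => _].
  case: Hy => [E1|E2].
  + have N2 : y o2 != y o0 by apply/eqP => E2; apply: Hne.
    apply: (Pext (Pind c N2 Pu')) => i; rewrite /h /u'.
    case: (eqVneq (t i) (t i0)) => [E|Hne'] /=.
      by rewrite andbF Hdc' E1.
    by case: (u i == c) => /=; rewrite ?eqxx ?Hdc'.
  + have N1 : y o1 != y o0 by apply/eqP => E1; apply: Hne.
    apply: (Pext (Ptwo i0 N1)) => i; rewrite /h.
    case: eqP => // _; by case: ifP.
Qed.

Lemma main_u u0 : D u0 -> P u0.
Proof.
move=> Du0; apply: NNPP => NPu0.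
have Htv : forall u, D u -> TV u -> P u.
  move=> u Du Tu; apply: NNPP => N; apply: step1; by exists u.
pose Q j := exists u, D u /\ ~ P u /\ nv u = j.
have [|j [[u [Du [NPu Hj]]] Hmin]] := min_ex (Q := Q) (m := nv u0); first by exists u0.
have Hmin' : forall u', D u' -> (nv u' < j)%N -> P u'.
  move=> u' Du' Hlt; apply: NNPP => N; apply: (Hmin _ Hlt); by exists u'.
have Hj3 : (3 <= j)%N.
  rewrite leqNgt; apply/negP => Hlt; apply: NPu; apply: Htv => //.
  have Hin : forall i, u i \in undup (map u (enum 'I_n)) by move=> i; rewrite mem_undup map_f ?mem_enum.
  move: Hin Hlt; rewrite -Hj /nv; case: (undup _) => [|x0 [|x1 [|x2 s']]] //= Hin _.
  - by exists 0, 0 => i; have := Hin i.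
  - by exists x0, x0 => i; have := Hin i; rewrite inE => /eqP ->; left.
  - by exists x0, x1 => i; have := Hin i; rewrite !inE => /orP [] /eqP ->; [left|right].
set s := sort <=%R (undup (map u (enum 'I_n))).
have Hs : size s = j by rewrite size_sort.
have Hmem : forall i, u i \in s by move=> i; rewrite mem_sort mem_undup map_f ?mem_enum.
have Hh : forall i, (index (u i) s < j)%N by move=> i; rewrite -Hs index_mem.
pose h := fun i => Ordinal (Hh i).
have Hu : forall i, nth 0 s (h i) = u i by move=> i; rewrite nth_index.
have sorted_s : sorted <%R s.
  by rewrite lt_sorted_uniq_le sort_uniq undup_uniq sort_sorted //; exact: le_total.
apply: (HnoOr Hj3).
apply: ppd_ext (ppd_big (enum {ffun 'I_j -> 'I_j})
   (R := fun rho y => P (fun i => y (rho (h i)))) (fun rho => Hsub (fun i => rho (h i)))) _.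
move=> y; split.
- move=> Hall; apply: NNPP => NE.
  have yinj : injective y.
    move=> a b E; apply: NNPP => Nab; apply: NE; exists a, b; split => //; exact/eqP.
  set sy := sort <=%R (map y (enum 'I_j)).
  have Hsy : size sy = j by rewrite size_sort size_map size_enum_ord.
  have sorted_sy : sorted <%R sy.
    by rewrite lt_sorted_uniq_le sort_uniq (map_inj_uniq yinj) enum_uniq sort_sorted //; exact: le_total.
  have Hx : forall k : 'I_j, nth 0 sy k \in map y (enum 'I_j).
    by move=> k; rewrite -(mem_sort <=%R) mem_nth // Hsy.
  have Hr : forall k : 'I_j, (index (nth 0%R sy k) (map y (enum 'I_j)) < j)%N.
    move=> k; have Hsz : size (map y (enum 'I_j)) = j by rewrite size_map size_enum_ord.
    by rewrite -[X in (_ < X)%N]Hsz index_mem.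
  pose rho := [ffun k => Ordinal (Hr k)].
  have Hyr : forall k, y (rho k) = nth 0 sy k.
    move=> k; rewrite ffunE -[RHS](nth_index 0 (Hx k)) (nth_map k); last first.
      by rewrite size_enum_ord.
    congr y; exact: (esym (nth_ord_enum k (Ordinal (Hr k)))).
  have [F [HF HFk]] := interp sorted_sy sorted_s (etrans Hsy (esym Hs)).
  have := Hinv HF (Hall rho (mem_enum _ _)).
  move=> HP; apply: NPu; apply: (Pext HP) => i.
  by rewrite Hyr HFk ?Hsy // Hu.
- move=> [a [b [Hab Eab]]] rho _.
  apply: Hmin'.
  + move=> i i' E; have Eu := Du i i' E.
    have -> // : h i = h i' by apply: val_inj; rewrite /= Eu.
  + apply: (@leq_ltn_trans (size (undup (map y (enum 'I_j))))).
    * apply: uniq_leq_size; first exact: undup_uniq.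
      move=> x; rewrite !mem_undup => /mapP [i _ ->]; exact: map_f (mem_enum _ _).
    * have Hle := size_undup (map y (enum 'I_j)); rewrite size_map size_enum_ord in Hle.
      rewrite ltn_neqAle Hle andbT; apply/negP => /eqP E.
      have : uniq (map y (enum 'I_j)).
        by rewrite (uniq_size_uniq (undup_uniq _) (mem_undup _)) size_map size_enum_ord E.
      move/injectiveP => yinj; move/eqP: Hab; apply; exact: yinj.
Qed.
End Main.

Theorem lemma4p7 (G : structure) :
  temporal G ->
  preserves G peak ->
  ~ pp_defines G EqXor ->
  (forall n : nat, (3 <= n)%N -> ~ pp_defines G (@EqOr n)) ->
  forall f : rat -> rat, bijective f -> preserves G f.
Proof.
move=> Htemp Hpk HnoX HnoOr f _ R HR t Ht.
have [phi Hphi] := Htemp R HR.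
apply: (@main_u G (ar R) (@rl R) _ _ _ HnoX HnoOr t Ht).
- move=> F HF u Pu.
  have E1 := Hphi u (extv u) (extvE u).
  have E2 := Hphi (fun i => F (u i)) (fun y => F (extv u y)) (fun i => congr1 F (extvE u i)).
  apply/E2; apply/(fo_inv HF phi (v := extv u)) => //; exact/E1.
- move=> u Pu; exact: Hpk R HR u Pu.
- move=> m h; apply: ppd_sub; exact: ppd_base.
- by move=> i i' E; rewrite E.
Qed.
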